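(* Let $n\ge2$ and let $M,S,L\subset\mathbb{R}^n$ be the sets of mixed, split and level points. Then there exists a homeomorphism $g:\mathbb{R}^n\to L\times\mathbb{R}$ with $g(M)=L\times(-\infty,0)$ and $g(S)=L\times(0,+\infty)$. In particular $\overline{M}\cap\overline{S}=L$.
   Context: Write $[n]=\{1,\dots,n\}$. For $x\in\mathbb{R}^n$ let $t(x)=\min\{x_k-x_{k'}: k\in[n]\text{ odd},\ k'\in[n]\text{ even}\}$. The point $x$ is mixed, level or split according as $t(x)<0$, $t(x)=0$ or $t(x)>0$; $M$, $L$, $S$ denote the sets of mixed, level and split points in $\mathbb{R}^n$. *)

(* Defs.v *)
From Stdlib Require Import Reals.
From mathcomp Require Import all_boot.
Set Implicit Arguments. Unset Strict Implicit. Unset Printing Implicit Defensive.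

(* A point of R^n: coordinates indexed by 'I_n = {0,...,n-1}.
   Index i : 'I_n corresponds to the paper's k = i+1 in [n]. *)
Definition pt (n : nat) := 'I_n -> R.

Open Scope R_scope.

Definition diffs (n : nat) (x : pt n) : seq R :=
  [seq x p.1 - x p.2 | p : 'I_n * 'I_n <- [seq (i, j) | i <- enum 'I_n, j <- enum 'I_n]
                     & odd (p.1).+1 && ~~ odd (p.2).+1].

(* t(x) = min of the differences (the list is nonempty when n >= 2). *)
Definition tval (n : nat) (x : pt n) : R :=
  match diffs x with
  | [::] => 0
  | d :: ds => foldr Rmin d ds
  end.

Definition is_mixed (n : nat) (x : pt n) : Prop := tval x < 0.
Definition is_level (n : nat) (x : pt n) : Prop := tval x = 0.
Definition is_split (n : nat) (x : pt n) : Prop := tval x > 0.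

(* Sup-norm closeness on R^n (induces the standard topology). *)
Definition close (n : nat) (x y : pt n) (eps : R) : Prop :=
  forall i, Rabs (x i - y i) < eps.

Definition cont_to_prod (n : nat) (g : pt n -> pt n * R) : Prop :=
  forall x eps, eps > 0 -> exists delta, delta > 0 /\
    forall y, close x y delta ->
      close (g x).1 (g y).1 eps /\ Rabs ((g x).2 - (g y).2) < eps.

Definition cont_on_LxR (n : nat) (h : pt n * R -> pt n) : Prop :=
  forall l s, is_level l -> forall eps, eps > 0 -> exists delta, delta > 0 /\
    forall l' s', is_level l' -> close l l' delta -> Rabs (s - s') < delta ->
      close (h (l, s)) (h (l', s')) eps.

Definition rclosure (n : nat) (A : pt n -> Prop) (x : pt n) : Prop :=
  forall eps, eps > 0 -> exists y, A y /\ close x y eps.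

(* Main.v *)
Require Import Defs.
From Stdlib Require Import Reals Lra.
From mathcomp Require Import all_boot.
Open Scope R_scope.

Definition Pl (n : nat) : seq ('I_n * 'I_n) :=
  filter (fun p : 'I_n * 'I_n => odd (p.1).+1 && ~~ odd (p.2).+1)
    [seq (i, j) | i <- enum 'I_n, j <- enum 'I_n].

Definition fmin (l : seq R) : R :=
  match l with [::] => 0 | d :: ds => foldr Rmin d ds end.

Lemma tvalE n (x : pt n) : Defs.tval x = fmin [seq x (fst p) - x (snd p) | p <- Pl n].
Proof. reflexivity. Qed.

Lemma Rmin_shift a b c : Rmin (a + c) (b + c) = Rmin a b + c.
Proof. unfold Rmin; destruct (Rle_dec (a+c) (b+c)); destruct (Rle_dec a b); lra. Qed.

Lemma Rmin_lip a b a' b' e : Rabs (a - a') < e -> Rabs (b - b') < e ->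
  Rabs (Rmin a b - Rmin a' b') < e.
Proof.
  unfold Rmin; destruct (Rle_dec a b); destruct (Rle_dec a' b');
  unfold Rabs; repeat destruct Rcase_abs; lra.
Qed.

Lemma fmin_lip (T : Type) (f g : T -> R) (l : seq T) e : e > 0 ->
  (forall p, Rabs (f p - g p) < e) ->
  Rabs (fmin (map f l) - fmin (map g l)) < e.
Proof.
  move=> he H; case: l => [|p l] /=.
  - rewrite Rminus_0_r Rabs_R0; lra.
  - elim: l => [|q l IH] /=; first exact: H.
    apply: Rmin_lip => //.
Qed.

Lemma fmin_shift (T : Type) (f : T -> R) (l : seq T) c : l <> [::] ->
  fmin (map (fun p => f p + c) l) = fmin (map f l) + c.
Proof.
  case: l => [//|p l] _ /=.
  elim: l => [|q l IH] //=. by rewrite IH Rmin_shift.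
Qed.

Lemma Pl_ne n : (2 <= n)%N -> Pl n <> [::].
Proof.
  move=> hn.
  have h0 : (0 < n)%N by apply: leq_trans hn.
  have h1 : (1 < n)%N by [].
  have : (Ordinal h0, Ordinal h1) \in Pl n.
    rewrite mem_filter /=. apply: allpairs_f; by rewrite mem_enum.
  by move=> H E; rewrite E in H.
Qed.

Definition uv {n} (i : 'I_n) : R := if odd i.+1 then 1 else 0.

Lemma tval_shift n (hn : (2 <= n)%N) (x : pt n) c :
  Defs.tval (fun i => x i + c * uv i) = Defs.tval x + c.
Proof.
  rewrite !tvalE -fmin_shift; last exact: Pl_ne.
  congr fmin. apply/eq_in_map => p; rewrite mem_filter => /andP [/andP [h1 h2] _].
  rewrite /uv h1 (negbTE h2). lra.
Qed.

Lemma tval_lip n (x y : pt n) e : e > 0 -> close x y e ->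
  Rabs (Defs.tval x - Defs.tval y) < 2 * e.
Proof.
  move=> he H; rewrite !tvalE; apply: fmin_lip; first lra.
  move=> p; have := H (fst p); have := H (snd p).
  unfold Rabs; repeat destruct Rcase_abs; lra.
Qed.

From Stdlib Require Import FunctionalExtensionality.

Lemma uv01 {n} (i : 'I_n) : 0 <= uv i <= 1.
Proof. rewrite /uv; case: (odd _); lra. Qed.

Definition hF {n} (p : pt n * R) : pt n := fun i => fst p i + snd p * uv i.
Definition gF {n} (x : pt n) : pt n * R := (hF (x, - Defs.tval x), Defs.tval x).

Theorem lemma1p9 (n : nat) (hn : (2 <= n)%N) :
  (exists (g : pt n -> pt n * R) (h : pt n * R -> pt n),
      (* g maps into L x R, with inverse h on L x R *)
      (forall x, is_level (g x).1) /\
      (forall x, h (g x) = x) /\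
      (forall l s, is_level l -> g (h (l, s)) = (l, s)) /\
      (* g and its inverse are continuous *)
      cont_to_prod g /\ cont_on_LxR h /\
      (* g(M) = L x (-oo,0) *)
      (forall p, (exists x, is_mixed x /\ g x = p) <-> (is_level p.1 /\ p.2 < 0)) /\
      (* g(S) = L x (0,+oo) *)
      (forall p, (exists x, is_split x /\ g x = p) <-> (is_level p.1 /\ p.2 > 0)))
  /\
  (forall x : pt n, (rclosure (@is_mixed n) x /\ rclosure (@is_split n) x) <-> is_level x).
Proof.
  set h := hF (n:=n). set g := gF (n:=n).
  have lev : forall x, is_level (fst (g x)).
    move=> x; rewrite /is_level /g /h /gF /hF /= tval_shift //; lra.
  have hg : forall x, h (g x) = x.
    move=> x; apply: functional_extensionality => i; rewrite /h /g /gF /hF /=; ring.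
  have gh : forall l s, is_level l -> g (h (l, s)) = (l, s).
    move=> l s hl; rewrite /g /gF; have ht : Defs.tval (h (l, s)) = s.
      rewrite /h /hF /= tval_shift // hl; lra.
    rewrite ht; congr pair; apply: functional_extensionality => i; rewrite /h /hF /=; lra.
  split.
  exists g, h; split; first exact: lev.
  split; first exact: hg.
  split; first exact: gh.
  split.
    move=> x eps he; exists (eps / 3); split; first lra.
    move=> y hc; have e3 : eps / 3 > 0 by lra. have ht := @tval_lip n _ _ _ e3 hc.
    split.
    - move=> i; rewrite /g /h /gF /hF /=; have := hc i; have := uv01 i.
      move: ht; set a := Defs.tval x; set b := Defs.tval y; move=> ht hu hi.
      have -> : x i + - a * uv i - (y i + - b * uv i) = (x i - y i) + (b - a) * uv i by lra.
      apply: Rle_lt_trans; first apply: Rabs_triang.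
      rewrite Rabs_mult (Rabs_right (uv i)); last lra.
      have : Rabs (b - a) * uv i <= Rabs (b - a).
        rewrite -{2}(Rmult_1_r (Rabs (b - a))); apply: Rmult_le_compat_l; [apply: Rabs_pos|lra].
      rewrite Rabs_minus_sym in ht; lra.
    - rewrite /g /gF /hF /=; lra.
  split.
    move=> l s hl eps he; exists (eps / 2); split; first lra.
    move=> l' s' hl' hc hs i; rewrite /h /hF /=; have := hc i; have := uv01 i => hu hi.
    have -> : l i + s * uv i - (l' i + s' * uv i) = (l i - l' i) + (s - s') * uv i by lra.
    apply: Rle_lt_trans; first apply: Rabs_triang.
    rewrite Rabs_mult (Rabs_right (uv i)); last lra.
    have : Rabs (s - s') * uv i <= Rabs (s - s').
      rewrite -{2}(Rmult_1_r (Rabs (s - s'))); apply: Rmult_le_compat_l; [apply: Rabs_pos|lra].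
    lra.
  split.
    move=> [l s]; split.
    - move=> [x [hx <-]]; split; first exact: lev. by [].
    - move=> /= [hl hs]; exists (h (l, s)); rewrite gh //; split => //.
      rewrite /is_mixed /h /hF /= tval_shift // hl; lra.
  move=> [l s]; split.
  - move=> [x [hx <-]]; split; first exact: lev. by [].
  - move=> /= [hl hs]; exists (h (l, s)); rewrite gh //; split => //.
    rewrite /is_split /h /hF /= tval_shift // hl; lra.
  move=> x; split.
  - move=> [hm hs]; rewrite /is_level.
    destruct (Rtotal_order (Defs.tval x) 0) as [hlt|[heq|hgt]] => //.
    + have e0 : - Defs.tval x / 2 > 0 by lra.
      have [y [hy hc]] := hs _ e0.
      have := @tval_lip n _ _ _ e0 hc; rewrite /is_split in hy.
      unfold Rabs; destruct Rcase_abs; lra.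
    + have e0 : Defs.tval x / 2 > 0 by lra.
      have [y [hy hc]] := hm _ e0.
      have := @tval_lip n _ _ _ e0 hc; rewrite /is_mixed in hy.
      unfold Rabs; destruct Rcase_abs; lra.
  - move=> hl; split => eps he.
    + exists (h (x, - (eps / 2))); split.
      * rewrite /is_mixed /h /hF /= tval_shift // hl; lra.
      * move=> i; rewrite /h /hF /=; have := uv01 i => hu.
        have -> : x i - (x i + - (eps / 2) * uv i) = (eps / 2) * uv i by lra.
        rewrite Rabs_right; [nra|nra].
    + exists (h (x, eps / 2)); split.
      * rewrite /is_split /h /hF /= tval_shift // hl; lra.
      * move=> i; rewrite /h /hF /=; have := uv01 i => hu.
        have -> : x i - (x i + (eps / 2) * uv i) = - ((eps / 2) * uv i) by lra.
        rewrite Rabs_Ropp Rabs_right; [nra|nra].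
Qed.
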